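(* For every $m\in\mathbb N$ and every choice of $A_\ell$, $J_\ell$, $\ell=1,\ldots,m$, as in the context, and every $n\in\mathbb N$, \[\left|\mathbb P\left(\bigcap_{\ell=1}^m\mathscr W_{J_{n,\ell}}\left(A^{(q_n)}_{n,\ell}\right)\right)-\mathbb P\left(\bigcap_{\ell=1}^m\mathscr W_{J_{n,\ell}}\left(A_{n,\ell}\right)\right)\right|\leq q_n\sum_{\ell=1}^m\mathbb P(A_{n,\ell}).\]
   Context: Let $\mathbf X_0,\mathbf X_1,\ldots$ be a stationary sequence of random vectors in $\mathcal V=\mathbb R^d$, identified with the coordinate process on $(\mathcal V^{\mathbb N_0},\mathcal B^{\mathbb N_0},\mathbb P)$, with $\sigma$ the (measure-preserving) left shift $\sigma((x_i)_i)=(x_{i+1})_i$. Let $u_n:(0,\infty)\to(0,\infty)$ be normalising threshold functions (nonincreasing, left continuous, with $n\mathbb P(\|\mathbf X_0\|>u_n(\tau))\to\tau$ for every $\tau>0$), and set $u_n^{-1}(z)=\sup\{\tau>0: z\le u_n(\tau)\}$. Let $(k_n)$, $(t_n)$, $(q_n)$ be sequences of positive integers with $k_n,t_n\to\infty$, $k_nt_n=o(n)$, $r_n:=\lfloor n/k_n\rfloor\to\infty$ and $q_n=o(r_n)$. For an event $A$ and an interval $J\subset[0,\infty)$ let $\mathscr W_J(A)=\bigcap_{i\in J\cap\mathbb N_0}\sigma^{-i}(A^c)$ (no occurrence of $A$ at times in $J$), and for $j\in\mathbb N$ let $A^{(j)}=A\cap\sigma^{-1}(A^c)\cap\cdots\cap\sigma^{-j}(A^c)$.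 Let $\mathscr F$ be the field of cylinder sets $\{(x_j)_j: x_j\in H_j,\ j=0,\ldots,m\}$ with $H_j$ Borel in $\mathcal V$, $m\in\mathbb N$. For $\ell=1,\ldots,m$ take $A_\ell\in\mathscr F$ and $J_\ell=[a_\ell,b_\ell)$ with $0\le a_1<b_1\le a_2<\cdots\le a_m<b_m\le1$, and define $J_{n,\ell}=\big[(\lceil k_na_\ell\rceil-1)r_n,(\lfloor k_nb_\ell\rfloor+1)r_n\big)$ and $A_{n,\ell}=\left\{\left(u_n^{-1}(\|\mathbf X_j\|)\frac{\mathbf X_j}{\|\mathbf X_j\|}\right)_j\in A_\ell\right\}$, with $A^{(q_n)}_{n,\ell}=(A_{n,\ell})^{(q_n)}$. *)

(* Defs.v *)
From HB Require Import structures.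
From mathcomp Require Import all_boot all_order all_algebra.
From mathcomp Require Import all_classical all_reals all_analysis.
Set Implicit Arguments. Unset Strict Implicit. Unset Printing Implicit Defensive.
Import Order.TTheory GRing.Theory Num.Theory.
Import numFieldNormedType.Exports.
Local Open Scope classical_set_scope.
Local Open Scope ring_scope.

Section Defs.
Variables (R : realType) (d : nat).
Local Notation V := 'rV[R]_d.

Definition is_norm (nrm : V -> R) : Prop :=
  [/\ forall x, 0 <= nrm x,
      forall x, nrm x = 0 -> x = 0,
      forall (c : R) x, nrm (c *: x) = `|c| * nrm x
    & forall x y, nrm (x + y) <= nrm x + nrm y].

Definition borelV : set (set V) := <<s (@open V) >>.

Definition cylinder (A : set (nat -> V)) : Prop :=
  exists (m : nat) (H : nat -> set V),
    (forall j, borelV (H j)) /\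
    A = [set x | forall j, (j <= m)%N -> H j (x j)].

Definition seqV := g_sigma_algebraType cylinder.

Definition sshift (x : nat -> V) : nat -> V := fun k => x k.+1.

Definition shiftpre (i : nat) (A : set (nat -> V)) : set (nat -> V) :=
  (iter i (@sshift)) @^-1` A.

(* W_J(A) for J = [lo, hi) with integer endpoints: no occurrence of A at
   times i in J /\ N0. *)
Definition W (lo hi : int) (A : set (nat -> V)) : set (nat -> V) :=
  \bigcap_(i in [set i : nat | (lo <= i%:Z)%R /\ (i%:Z < hi)%R])
     shiftpre i (~` A).

Definition Aj (j : nat) (A : set (nat -> V)) : set (nat -> V) :=
  A `&` \bigcap_(i in [set i : nat | (1 <= i <= j)%N]) shiftpre i (~` A).

Definition uinv (u : R -> R) (z : R) : R :=
  fine (ereal_sup [set (t%:E)%E | t in [set t : R | 0 < t /\ z <= u t]]).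

Definition transf (nrm : V -> R) (u : R -> R) (x : nat -> V) : nat -> V :=
  fun j => (uinv u (nrm (x j)) / nrm (x j)) *: x j.

Definition Anl (nrm : V -> R) (u : R -> R) (A : set (nat -> V)) :
  set (nat -> V) := transf nrm u @^-1` A.

Definition Jlo (k r : nat) (a : R) : int := (Num.ceil (k%:R * a) - 1) * r%:Z.
Definition Jhi (k r : nat) (b : R) : int := (Num.floor (k%:R * b) + 1) * r%:Z.

End Defs.

(* Main.v *)
Require Import Defs.
From HB Require Import structures.
From mathcomp Require Import all_boot all_order all_algebra.
From mathcomp Require Import all_classical all_reals all_analysis.
From mathcomp Require Import lra.
Import Order.TTheory GRing.Theory Num.Theory.
Import numFieldNormedType.Exports.
Local Open Scope classical_set_scope.
Local Open Scope ring_scope.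
From mathcomp Require Import zify.
Section S.
Variables (R : realType) (d : nat).
Local Notation V := 'rV[R]_d.

Lemma open_epsP (A : set V) :
  (forall x, A x -> exists2 e : R, 0 < e & forall y, `|x - y| < e -> A y) -> open A.
Proof.
move=> H; rewrite openE => x Ax; rewrite /interior.
apply/nbhs_ballP; have [e e0 He] := H x Ax; exists e => // y; rewrite -ball_normE /=; exact: He.
Qed.

Lemma open_epsE (A : set V) x : open A -> A x ->
  exists2 e : R, 0 < e & forall y, `|x - y| < e -> A y.
Proof.
rewrite openE => oA Ax; have := oA x Ax; rewrite /interior => /nbhs_ballP[e e0 He].
by exists e => // y hy; apply: He; rewrite -ball_normE.
Qed.

Lemma coord_le_norm (v : V) i : `|v 0 i| <= `|v|.
Proof.
have /mapP[j Hj ->] : `|v ord0 i| \in [seq `|v x.1 x.2| | x : 'I_1 * 'I_d].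
  by apply/mapP; exists (ord0, i) => //=; rewrite mem_enum.
by change (`|v j.1 j.2| <= mx_norm v); rewrite mx_normrE; apply/bigmax_geP; right => /=; exists j.
Qed.

Lemma nrm_bound (nrm : V -> R) : is_norm nrm ->
  exists2 C : R, 0 < C & forall x, nrm x <= C * `|x|.
Proof.
case=> n0 _ nZ nD.
exists (1 + \sum_(i < d) nrm (delta_mx 0 i)).
  by rewrite ltr_pwDl // sumr_ge0.
move=> x; rewrite {1}(row_sum_delta x).
have nrm0 : nrm 0 = 0 by rewrite -(scale0r (0 : V)) nZ normr0 mul0r.
apply: (@le_trans _ _ (\sum_(i < d) `|x| * nrm (delta_mx 0 i))).
  apply: (big_ind2 (fun a b => nrm a <= b)).
  - by rewrite nrm0.
  - move=> a b c e h1 h2; apply: le_trans (nD _ _) _; exact: lerD.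
  - move=> i _; rewrite nZ; apply: ler_wpM2r => //; exact: coord_le_norm.
rewrite -mulr_sumr [X in _ <= X]mulrC ler_wpM2l //; rewrite -[X in X <= _]add0r; apply: lerD => //.
Qed.
End S.
Section S2.
Variables (R : realType) (d : nat).
Local Notation V := 'rV[R]_d.
Local Notation Vm := (g_sigma_algebraType (@open V)).

Lemma nrm_lip (nrm : V -> R) : is_norm nrm ->
  exists2 C : R, 0 < C & forall x y, nrm y >= nrm x - C * `|x - y|.
Proof.
move=> hn; have [C C0 HC] := @nrm_bound _ _ _ hn; exists C => // x y.
case: hn => _ _ nZ nD.
have : nrm x <= nrm y + nrm (x - y) by have := nD y (x - y); rewrite [y + _]addrCA subrr addr0.
have := HC (x - y); lra.
Qed.

Lemma nrm_measurable (nrm : V -> R) : is_norm nrm ->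
  measurable_fun (setT : set Vm) nrm.
Proof.
move=> hn; have [C C0 HC] := @nrm_lip _ hn.
apply: (measurability (@measurable_realfun.RGenOInfty.G R)) => [|_ [_ [r ->] <-]].
  exact: measurable_realfun.RGenOInfty.measurableE.
apply: sub_sigma_algebra; rewrite setTI; apply: open_epsP => x /=.
rewrite in_itv /= andbT => rx.
exists ((nrm x - r) / C); first by rewrite divr_gt0 // subr_gt0.
move=> y hy; rewrite in_itv /= andbT.
have := HC x y; have : C * `|x - y| < nrm x - r.
  by rewrite mulrC -ltr_pdivlMr.
lra.
Qed.

Lemma inv_measurable : measurable_fun (setT : set R) (@GRing.inv R).
Proof.
apply: (measurability (@measurable_realfun.RGenOInfty.G R)) => [|_ [_ [y ->] <-]].
  exact: measurable_realfun.RGenOInfty.measurableE.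
rewrite setTI.
have -> : GRing.inv @^-1` `]y, +oo[ =
  [set z : R | 0 <= z /\ y < z^-1] `|` [set z | z < 0 /\ y < z^-1].
  apply/seteqP; split => z /=; rewrite in_itv /= andbT.
    by case: (leP 0 z) => z0 yz; [left|right].
  by case=> -[].
apply: measurableU; apply: measurable_realfun.is_interval_measurable => a b /= [a0 ya] [b0 yb] z
  /andP[az zb].
  have z0 : 0 <= z by apply: le_trans az.
  split => //; have [z00|zn0] := eqVneq z 0.
    by rewrite z00 (_ : 0 = a) //; apply/eqP; rewrite eq_le a0 -z00 az.
  have zp : 0 < z by rewrite lt_neqAle eq_sym zn0.
  have bp : 0 < b by apply: lt_le_trans zb.
  by apply: (lt_le_trans yb); rewrite lef_pV2 // posrE.
have z0 : z < 0 by apply: le_lt_trans b0.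
split => //; apply: (lt_le_trans yb); rewrite lef_nV2 // negrE.
Qed.

Definition Fsup (u : R -> R) (z : R) : \bar R :=
  ereal_sup [set (t%:E)%E | t in [set t : R | 0 < t /\ z <= u t]].

Lemma Fsup_mono u z1 z2 : z1 <= z2 -> (Fsup u z2 <= Fsup u z1)%E.
Proof.
move=> z12; apply: ereal_sup_le => _ [t [t0 ht] <-]; exists t => //.
split => //; exact: le_trans ht.
Qed.

Lemma Fsup_fine_ge0 u z : 0 <= fine (Fsup u z).
Proof.
rewrite /Fsup; set S := [set t : R | _].
have [->|/set0P[t St]] := eqVneq S set0.
  by rewrite image_set0 ereal_sup0.
apply: fine_ge0; apply: le_ereal_sup_tmp; exists t%:E; first by exists t.
by rewrite lee_fin; case: St => /ltW.
Qed.

Lemma uinvE u z : uinv u z = fine (Fsup u z).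
Proof. by []. Qed.

Lemma uinv_measurable u : measurable_fun (setT : set R) (uinv u).
Proof.
apply: (measurability (@measurable_realfun.RGenOInfty.G R)) => [|_ [_ [y ->] <-]].
  exact: measurable_realfun.RGenOInfty.measurableE.
rewrite setTI; apply: measurable_realfun.is_interval_measurable => a b /=.
move=> ya yb z /andP[az zb]; move: ya yb; rewrite !in_itv /= !andbT !uinvE => ya yb.
have [y0|y0] := ltP y 0.
  by apply: (lt_le_trans y0); exact: Fsup_fine_ge0.
have := @Fsup_mono u _ _ az; have := @Fsup_mono u _ _ zb.
move: ya yb; case: (Fsup u a) => [ra| |] /=; try lra.
case: (Fsup u b) => [rb| |] /=; try lra.
case: (Fsup u z) => [rz| |] //=; rewrite ?lee_fin; lra.
Qed.

End S2.
Section S3.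
Variables (R : realType) (d : nat).
Local Notation V := 'rV[R]_d.
Local Notation Vm := (g_sigma_algebraType (@open V)).

Lemma open_measV (A : set V) : open A -> measurable (A : set Vm).
Proof. by move=> oA; apply: sub_sigma_algebra. Qed.

Lemma scal_measurable (c : V -> R) (O : set V) :
  measurable_fun (setT : set Vm) c -> open O ->
  measurable ([set v : V | O (c v *: v)] : set Vm).
Proof.
move=> cm oO.
pose T (p : int * nat * nat) : set V :=
  let: (z, N, M) := p in
  let N' : R := N.+1%:R in let M' : R := M.+1%:R in
  let r := z%:~R / N' in let del := 2 / N' in
  (c @^-1` `]r - del, r + del[) `&` [set w | `|w| < M'] `&`
  [set w | forall y, `|r *: w - y| < del * M' -> O y].
have -> : [set v : V | O (c v *: v)] =
  \bigcup_i (match unpickle i with Some p => T p | None => set0 end).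
  apply/seteqP; split; last first.
    move=> v [i _]; case: (unpickle i) => [[[z N] M]|] //; rewrite /T.
    set N' : R := N.+1%:R; set M' : R := M.+1%:R.
    set r := z%:~R / N'; set del := 2 / N'.
    have N'0 : 0 < N' by rewrite ltr0n.
    have del0 : 0 < del by rewrite divr_gt0.
    move=> -[[hc hM] hK]; move: hc; rewrite /= in_itv /= => /andP[h1 h2]; apply: hK.
    rewrite -scalerBl normrZ.
    have h3 : `|r - c v| < del by rewrite ltr_norml; apply/andP; split; lra.
    apply: (@le_lt_trans _ _ (del * `|v|)); first by rewrite ler_wpM2r // ltW.
    by rewrite ltr_pM2l.
  move=> v Ov; have [e e0 He] := @open_epsE _ _ _ _ oO Ov.
  set M := Num.truncn `|v|; set N := Num.truncn (3 * M.+1%:R / e).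
  set z := Num.floor (c v * N.+1%:R).
  exists (pickle (z, N, M)); first by []; rewrite pickleK /T.
  set N' : R := N.+1%:R; set M' : R := M.+1%:R.
  set r := z%:~R / N'; set del := 2 / N'.
  have N'0 : 0 < N' by rewrite ltr0n.
  have M'0 : 0 < M' by rewrite ltr0n.
  have hM : `|v| < M' by apply: truncnS_gt.
  have hN : 3 * M' / e < N' by apply: truncnS_gt.
  have hz1 : z%:~R <= c v * N' by apply: floor_le.
  have hz2 : c v * N' < z%:~R + 1 by rewrite -[1]/(1%:~R) -intrD; apply: floorD1_gt.
  have hr1 : r <= c v by rewrite /r ler_pdivrMr.
  have hr2 : c v - r < N'^-1.
    have -> : c v = (c v * N') / N' by rewrite mulfK // gt_eqF.
    rewrite /r -mulrBl -[X in _ < X]mul1r ltr_pM2r ?invr_gt0 //; lra.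
  have hi : 0 < N'^-1 by rewrite invr_gt0.
  have hdel : del = 2 * N'^-1 by [].
  have hX : 3 * (N'^-1 * M') < e.
    by rewrite mulrCA ltr_pdivrMl // -ltr_pdivrMr.
  clearbody r del N' M'.
  move: (N'^-1) hi hr2 hdel hX => iN hi hr2 hdel hX.
  split; first split.
  - by rewrite /= in_itv /=; apply/andP; split; lra.
  - by [].
  move=> y hy; apply: He.
  have h1 := ler_distD (r *: v) (c v *: v) y.
  have h2 : `|c v *: v - r *: v| <= iN * M'.
    rewrite -scalerBl normrZ ger0_norm; last lra.
    by apply: ler_pM; [lra|apply: normr_ge0|lra|apply: ltW].
  have h4 : del * M' = 2 * (iN * M') by rewrite hdel mulrA.
  lra.
apply: bigcupT_measurable => i; case: (unpickle i) => [[[z N] M]|]; last first.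
  exact: measurable0.
rewrite /T; set N' : R := N.+1%:R; set M' : R := M.+1%:R.
set r := z%:~R / N'; set del := 2 / N'.
have N'0 : 0 < N' by rewrite ltr0n.
have M'0 : 0 < M' by rewrite ltr0n.
have del0 : 0 < del by rewrite divr_gt0.
apply: measurableI; first apply: measurableI.
- by have := cm measurableT _ (measurable_itv `]r - del, r + del[); rewrite setTI.
- apply: open_measV; apply: open_epsP => x /= hx; exists (M' - `|x|).
    by rewrite subr_gt0.
  move=> y hy; have := ler_normB x (x - y).
  rewrite (_ : x - (x - y) = y); last by rewrite opprB addrCA subrr addr0.
  lra.
- set K := [set w : V | _].
  rewrite -[K]setCK; apply: measurableC; apply: open_measV.
  apply: open_epsP => w /= /existsNP[y /not_implyP[hy nOy]].
  exists ((del * M' - `|r *: w - y|) / (`|r| + 1)).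
    by rewrite divr_gt0 ?subr_gt0 // ltr_pwDr.
  move=> w' hw' hK; apply: nOy; apply: hK.
  have h1 := ler_distD (r *: w) (r *: w') y.
  have h2 : `|r *: w' - r *: w| <= (`|r| + 1) * `|w - w'|.
    rewrite -scalerBr normrZ distrC ler_wpM2r //; lra.
  have h3 : (`|r| + 1) * `|w - w'| < del * M' - `|r *: w - y|.
    by rewrite mulrC -ltr_pdivlMr // ltr_pwDr.
  lra.
Qed.
End S3.
Section S4.
Variables (R : realType) (d : nat).
Local Notation V := 'rV[R]_d.
Local Notation Vm := (g_sigma_algebraType (@open V)).
Local Notation S := (seqV R d).

Lemma c_meas (nrm : V -> R) u : is_norm nrm ->
  measurable_fun (setT : set Vm) (fun v : V => uinv u (nrm v) / nrm v).
Proof.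
move=> hn.
have h : measurable_fun setT (fun z : R => uinv u z / z).
  apply: measurable_realfun.measurable_funM; [exact: uinv_measurable | exact: inv_measurable].
exact: (measurableT_comp h (@nrm_measurable _ _ _ hn)).
Qed.

Lemma f_meas (nrm : V -> R) u : is_norm nrm ->
  measurable_fun (setT : set Vm) (fun v : Vm => ((uinv u (nrm v) / nrm v) *: (v : V) : Vm)).
Proof.
move=> hn; apply: (@measurability _ _ _ _ _ _ ((@open V) : set (set Vm))) => //.
move=> _ [Op oO <-]; rewrite setTI.
exact: (@scal_measurable R d _ Op (c_meas nrm u hn) oO).
Qed.

Lemma Anl_cyl (nrm : V -> R) u (A : set (nat -> V)) : is_norm nrm ->
  cylinder A -> cylinder (Anl nrm u A).
Proof.
move=> hn [m [H [hH ->]]].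
exists m, (fun j => [set v : V | H j ((uinv u (nrm v) / nrm v) *: v)]); split.
  move=> j; have := f_meas nrm u hn measurableT (H j) (hH j); rewrite setTI; exact.
by [].
Qed.

Lemma cyl_meas (A : set S) : cylinder A -> measurable A.
Proof. by move=> hA; apply: sub_sigma_algebra. Qed.

Lemma sshift_meas (B : set S) : measurable B -> measurable (@sshift R d @^-1` B : set S).
Proof.
move=> mB.
have : measurable_fun (setT : set S) (@sshift R d : S -> S).
  apply: (@measurability _ _ _ _ _ _ ((@cylinder R d) : set (set S))) => //.
  move=> _ [C [m [H [hH ->]]] <-]; rewrite setTI; apply: cyl_meas.
  exists m.+1, (fun j => if j is j'.+1 then H j' else setT); split.
    by case=> [|j]; [exact: (@measurableT _ Vm) | exact: hH].
  apply/seteqP; split => x /=.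
    by move=> h [|j] //= hj; apply: h.
  by move=> h j hj; apply: (h j.+1).
by move=> /(_ measurableT B mB); rewrite setTI.
Qed.

Lemma shiftpre_meas i (B : set S) : measurable B -> measurable (shiftpre i B : set S).
Proof.
elim: i B => [|i IH] B mB; first exact: mB.
have -> : shiftpre i.+1 B = shiftpre i (@sshift R d @^-1` B) by [].
exact: (IH _ (sshift_meas B mB)).
Qed.

Lemma shiftpre_P (P : probability S R) :
  (forall A : set S, measurable A -> P (@sshift R d @^-1` A) = P A) ->
  forall i (B : set S), measurable B -> P (shiftpre i B) = P B.
Proof.
move=> st; elim=> [|i IH] B mB; first by [].
rewrite (_ : shiftpre i.+1 B = shiftpre i (@sshift R d @^-1` B)) //.
by rewrite IH ?st //; exact: sshift_meas.
Qed.

Lemma W_meas lo hi (B : set S) : measurable B -> measurable (W lo hi B : set S).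
Proof.
move=> mB; apply: bigcap_measurableType => i _.
by apply: shiftpre_meas; exact: measurableC.
Qed.

Lemma Aj_meas j (B : set S) : measurable B -> measurable (Aj j B : set S).
Proof.
move=> mB; apply: measurableI => //; apply: bigcap_measurableType => i _.
by apply: shiftpre_meas; exact: measurableC.
Qed.

End S4.
Section S5.
Variables (R : realType) (d : nat).
Local Notation V := 'rV[R]_d.

Lemma W_mono lo hi j (B : set (nat -> V)) : W lo hi B `<=` W lo hi (Aj j B).
Proof. by move=> x hx i Si; move: (hx i Si); rewrite /shiftpre /= => nB [hB _]. Qed.

Lemma W_neg lo H (B : set (nat -> V)) : W lo (Negz H) B = setT.
Proof. by apply/seteqP; split => // x _ i [_ /=]; lia. Qed.

Lemma key lo (H q : nat) (B : set (nat -> V)) x :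
  W lo (Posz H) (Aj q B) x -> ~ W lo (Posz H) B x ->
  exists2 j, (j < q)%N & shiftpre (H - j.+1) B x.
Proof.
move=> hA hB.
have [i0 [[lo_i0 i0H] Bi0]] :
    exists i, (lo <= i%:Z /\ i%:Z < H%:Z) /\ B (iter i (@sshift R d) x).
  apply: contra_notP hB => nex i [lo_i iH]; rewrite /shiftpre /= => Bi.
  by apply: nex; exists i.
pose P := fun i => `[< (lo <= i%:Z /\ i%:Z < H%:Z) /\ B (iter i (@sshift R d) x) >].
have exP : exists i, P i by exists i0; apply/asboolP.
have ubP : forall i, P i -> (i <= H)%N.
  by move=> i /asboolP[[_ ih] _]; lia.
case: (ex_maxnP exP ubP) => i /asboolP[[lo_i iH] Bi] imax.
have nAj : ~ Aj q B (iter i (@sshift R d) x) := hA i (conj lo_i iH).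
have [k [[k1 kq] Bk]] : exists k, (1 <= k /\ k <= q)%N /\
    B (iter k (@sshift R d) (iter i (@sshift R d) x)).
  apply: contra_notP nAj => nk; split => // k /andP[k1 kq]; rewrite /shiftpre /= => Bk.
  by apply: nk; exists k.
have Hki : (H <= k + i)%N.
  rewrite leqNgt; apply/negP => ltH.
  have : P (k + i).
    by apply/asboolP; split; [split; lia | rewrite iterD].
  move/imax; lia.
exists (H - i.+1)%N; first lia.
by rewrite (_ : H - (H - i.+1).+1 = i)%N //; lia.
Qed.

End S5.

Theorem proposition3p11 (R : realType) (d : nat) (nrm : 'rV[R]_d -> R)
  (P : probability (seqV R d) R) (u : nat -> R -> R) (k t q : nat -> nat) :
  is_norm nrm ->
  (* stationarity: the sshift is measure preserving *)
  (forall A : set (seqV R d), measurable A ->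
     P (@sshift R d @^-1` A) = P A) ->
  (* normalising threshold functions u_n : (0,oo) -> (0,oo) *)
  (forall n tau, 0 < tau -> 0 < u n tau) ->
  (forall n s tau, 0 < s -> s <= tau -> u n tau <= u n s) ->
  (forall n tau, 0 < tau -> u n x @[x --> tau^'-] --> u n tau) ->
  (forall tau, 0 < tau ->
     ((n%:R)%:E * P [set x : seqV R d | (u n tau < nrm (x 0%N))%R])%E
       @[n --> \oo] --> tau%:E) ->
  (* the sequences k_n, t_n, q_n *)
  (forall n, (0 < k n)%N) -> (forall n, (0 < t n)%N) -> (forall n, (0 < q n)%N) ->
  ((k n)%:R : R) @[n --> \oo] --> +oo ->
  ((t n)%:R : R) @[n --> \oo] --> +oo ->
  ((k n * t n)%:R / n%:R : R) @[n --> \oo] --> 0 ->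
  ((n %/ k n)%:R : R) @[n --> \oo] --> +oo ->
  ((q n)%:R / (n %/ k n)%:R : R) @[n --> \oo] --> 0 ->
  forall (m : nat) (A : nat -> set (nat -> 'rV[R]_d)) (a b : nat -> R),
  (0 < m)%N ->
  (forall l, (l < m)%N -> cylinder (A l)) ->
  (forall l, (l < m)%N -> 0 <= a l /\ a l < b l /\ b l <= 1) ->
  (forall l, (l.+1 < m)%N -> b l <= a l.+1) ->
  forall n : nat, (0 < n)%N ->
  (`| P (\bigcap_(l < m)
           W (Jlo (k n) (n %/ k n) (a l)) (Jhi (k n) (n %/ k n) (b l))
             (Aj (q n) (Anl nrm (u n) (A l))))
      - P (\bigcap_(l < m)
           W (Jlo (k n) (n %/ k n) (a l)) (Jhi (k n) (n %/ k n) (b l))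
             (Anl nrm (u n) (A l))) |
   <= (q n)%:R%:E * \sum_(l < m) P (Anl nrm (u n) (A l)))%E.
Proof.
move=> hn st _ _ _ _ _ _ _ _ _ _ _ _ m A a b _ hcyl _ _ n _.
set lo := fun l => Jlo (k n) (n %/ k n) (a l).
set hi := fun l => Jhi (k n) (n %/ k n) (b l).
set B := fun l => Anl nrm (u n) (A l).
set Q := q n.
have mB : forall l, (l < m)%N -> measurable (B l : set (seqV R d)).
  by move=> l hl; apply: cyl_meas; apply: Anl_cyl => //; exact: hcyl.
set X := \bigcap_(l < m) W (lo l) (hi l) (Aj Q (B l)).
set Y := \bigcap_(l < m) W (lo l) (hi l) (B l).
have mX : measurable (X : set (seqV R d)).
  by apply: bigcap_measurableType => l hl; apply: W_meas; apply: Aj_meas; exact: mB.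
have mY : measurable (Y : set (seqV R d)).
  by apply: bigcap_measurableType => l hl; apply: W_meas; exact: mB.
have YX : Y `<=` X by move=> x hx l hl; apply: W_mono; exact: hx.
have -> : (P X - P Y = P (X `\` Y))%E.
  rewrite measureD //; last first.
    by apply: (le_lt_trans (probability_le1 P mX)); rewrite ltry.
  by rewrite (setIidr YX).
rewrite gee0_abs; last exact: measure_ge0.
pose U l := \big[setU/set0]_(j < Q) shiftpre (`|hi l|%N - j.+1) (B l).
apply: (@le_trans _ _ (\sum_(l < m) P (U l))).
  apply: content_subadditive.
  - move=> l hl; apply: bigsetU_measurable => j _; apply: shiftpre_meas.
    exact: mB.
  - exact: measurableD.
  move=> x [hX hY]; rewrite -(@bigcup_mkord (seqV R d) m U).
  have [l hl nW] : exists2 l, (l < m)%N & ~ W (lo l) (hi l) (B l) x.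
    apply: contra_notP hY => nex l hl; apply: contra_notP (nex) => nW.
    by exists l.
  exists l => //; rewrite /U -(@bigcup_mkord (seqV R d) Q (fun j => shiftpre (`|hi l|%N - j.+1) (B l))).
  move: (hX l hl) nW; case: (hi l) => [H|H]; last by move=> _ nW0; exfalso; apply: nW0; rewrite W_neg.
  move=> hA hB; have [j jq hj] := @key _ _ _ _ _ _ _ hA hB.
  by exists j.
apply: (@le_trans _ _ (\sum_(l < m) (Q%:R%:E * P (B l)))%E).
  apply: lee_sum => l _.
  apply: (@le_trans _ _ (\sum_(j < Q) P (shiftpre (`|hi l|%N - j.+1) (B l)))).
    have mBl := mB l (ltn_ord l).
    apply: (@content_subadditive _ _ _ P (U l)
      (fun j => shiftpre (`|hi l|%N - j.+1) (B l)) Q).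
    - by move=> j _; apply: shiftpre_meas.
    - by apply: bigsetU_measurable => j _; apply: shiftpre_meas.
    - by [].
  rewrite (eq_bigr (fun=> P (B l))); last first.
    by move=> j _; apply: shiftpre_P => //; exact: mB.
  by rewrite sumr_const card_ord mule_natl.
rewrite ge0_sume_distrr //; move=> l _; exact: measure_ge0.
Qed.
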